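(* For all effect algebras $A,B$, the tensor product $A\otimes B$ is the colimit of $D_{A,B}$: $A\otimes B\cong\varinjlim D_{A,B}$.
   Context: Effect algebras are partial algebras $(A;+,0,1)$ satisfying the Foulis–Bennett axioms; one-element effect algebras are allowed. Morphisms preserve $1$ and defined sums; $\mathbf{EA}$ is the category. Boolean algebras are effect algebras via: $x+y$ is defined iff $x\wedge y=0$, and then $x+y=x\vee y$. For $[n]=\{1,\dots,n\}$, $\mathbf{FinBool}$ is the full subcategory of Boolean algebras on the objects $2^{[n]}$, $n\in\mathbb N$. The category $\int R(A)$ has: - objects: pairs $(2^{[n]},g)$ with $g\colon 2^{[n]}\to A$ an effect-algebra morphism; - arrows $(2^{[n]},g)\to(2^{[n']},g')$: Boolean algebra morphisms $f\colon 2^{[n]}\to 2^{[n']}$ with $g'\circ f=g$. $*$ is the coproduct of Boolean algebras. $D_{A,B}\colon\int R(A)\times\int R(B)\to\mathbf{EA}$ sends $\bigl((2^{[n]},g_A),(2^{[m]},g_B)\bigr)$ to $2^{[n]}*2^{[m]}$, and sends $(f_A,f_B)$ to $f_A*f_B$. A bimorphism from $A,B$ to $C$ is a map $h\colon A\times B\to C$ with $h(1,1)=1$ that is additive (preserving orthogonality and sums) in each argument separately. The tensor product $A\otimes B$ is the initial object of the category $\beta_{A,B}$, whose objects are bimorphisms from $A,B$ and whose morphisms $h\to h'$ are $\mathbf{EA}$-morphisms $f$ with $f\circ h=h'$. *)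

(* Defs.v *)
From mathcomp Require Import all_boot.
Set Implicit Arguments. Unset Strict Implicit. Unset Printing Implicit Defensive.

Record EA := MkEA {
  ea_car :> Type;
  ea_sum : ea_car -> ea_car -> option ea_car;
  ea_zero : ea_car;
  ea_one : ea_car;
  ea_comm : forall a b, ea_sum a b = ea_sum b a;
  ea_assoc : forall a b c ab abc,
      ea_sum a b = Some ab -> ea_sum ab c = Some abc ->
      exists bc, ea_sum b c = Some bc /\ ea_sum a bc = Some abc;
  ea_orth : forall a, exists! b, ea_sum a b = Some ea_one;
  ea_zo : forall a x, ea_sum a ea_one = Some x -> a = ea_zero }.
Arguments ea_sum : clear implicits.
Arguments ea_one : clear implicits.
Arguments ea_zero : clear implicits.

Definition ea_morph (A B : EA) (f : A -> B) : Prop :=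
  f (ea_one A) = ea_one B /\
  forall a b c, ea_sum A a b = Some c -> ea_sum B (f a) (f b) = Some (f c).

Definition ea_iso (A B : EA) : Prop :=
  exists (f : A -> B) (g : B -> A),
    ea_morph f /\ ea_morph g /\ (forall a, g (f a) = a) /\ (forall b, f (g b) = b).

Definition bool_sum (T : finType) (X Y : {set T}) : option {set T} :=
  if X :&: Y == set0 then Some (X :|: Y) else None.

Lemma setI0P (T : finType) (X Y : {set T}) :
  reflect (forall x, x \in X -> x \in Y -> False) (X :&: Y == set0).
Proof.
apply: (iffP eqP) => [e x xX xY | h].
  by have := in_set0 x; rewrite -e in_setI xX xY.
apply/setP => x; rewrite in_set0 in_setI.
by case xX: (x \in X); case xY: (x \in Y) => //; case: (h x).
Qed.

Lemma bool_sum_comm (T : finType) (X Y : {set T}) : bool_sum X Y = bool_sum Y X.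
Proof. by rewrite /bool_sum setIC setUC. Qed.

Lemma bool_sum_assoc (T : finType) (a b c ab abc : {set T}) :
  bool_sum a b = Some ab -> bool_sum ab c = Some abc ->
  exists bc, bool_sum b c = Some bc /\ bool_sum a bc = Some abc.
Proof.
rewrite /bool_sum; case: ifP => // /setI0P dab [<-]; case: ifP => // /setI0P dabc [<-].
have dbc : b :&: c == set0.
  by apply/setI0P => x xb xc; apply: (dabc x); rewrite ?in_setU ?xb ?orbT.
have dabc' : a :&: (b :|: c) == set0.
  apply/setI0P => x xa; rewrite in_setU => /orP[xb|xc].
    exact: (dab x).
  by apply: (dabc x); rewrite ?in_setU ?xa.
exists (b :|: c); rewrite dbc dabc'; split => //.
by rewrite setUA.
Qed.

Lemma bool_sum_orth (T : finType) (a : {set T}) :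
  exists! b, bool_sum a b = Some setT.
Proof.
exists (~: a); split.
  by rewrite /bool_sum setICr eqxx setUCr.
move=> b; rewrite /bool_sum; case: ifP => // /setI0P dab [e].
apply/setP => x; rewrite in_setC.
case xa: (x \in a).
  by case xb: (x \in b) => //; case: (dab x xa xb).
by have := in_setT x; rewrite -e in_setU xa.
Qed.

Lemma bool_sum_zo (T : finType) (a x : {set T}) :
  bool_sum a setT = Some x -> a = set0.
Proof.
rewrite /bool_sum; case: ifP => // /setI0P d _.
by apply/setP => y; rewrite in_set0; case ya: (y \in a) => //; case: (d y ya (in_setT y)).
Qed.

Definition bool_ea (T : finType) : EA :=
  @MkEA {set T} (@bool_sum T) set0 setT (@bool_sum_comm T) (@bool_sum_assoc T)
        (@bool_sum_orth T) (@bool_sum_zo T).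

Definition ba_morph (T U : finType) (f : {set T} -> {set U}) : Prop :=
  [/\ f set0 = set0, f setT = setT,
      (forall X Y, f (X :|: Y) = f X :|: f Y),
      (forall X Y, f (X :&: Y) = f X :&: f Y) &
      (forall X, f (~: X) = ~: f X)].

Record RObj (A : EA) := MkRObj {
  r_n : nat;
  r_g : {set 'I_r_n} -> A;
  r_g_morph : @ea_morph (bool_ea 'I_r_n) A r_g }.
Arguments r_g {A} r : rename.

Definition RArrow {A : EA} (o o' : RObj A)
    (f : {set 'I_(r_n o)} -> {set 'I_(r_n o')}) : Prop :=
  ba_morph f /\ forall X, r_g o' (f X) = r_g o X.
Arguments RArrow {A} o o' f.

(* 2^[n] * 2^[m] is realised as 2^([n] x [m]) with coproduct injections
   X |-> X x [m] and Y |-> [n] x Y. *)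
Definition coprod_obj (n m : nat) : EA := bool_ea ('I_n * 'I_m)%type.

Definition coprod_map (n n' m m' : nat)
    (fA : {set 'I_n} -> {set 'I_n'}) (fB : {set 'I_m} -> {set 'I_m'})
    (Z : {set 'I_n * 'I_m}) : {set 'I_n' * 'I_m'} :=
  \bigcup_(p in Z) setX (fA [set p.1]) (fB [set p.2]).

Definition D_obj (A B : EA) (oA : RObj A) (oB : RObj B) : EA :=
  coprod_obj (r_n oA) (r_n oB).

Definition legs (A B C : EA) :=
  forall (oA : RObj A) (oB : RObj B), D_obj oA oB -> C.

Definition is_cocone (A B C : EA) (c : legs A B C) : Prop :=
  (forall oA oB, ea_morph (c oA oB)) /\
  (forall (oA oA' : RObj A) (oB oB' : RObj B) fA fB,
      RArrow oA oA' fA -> RArrow oB oB' fB ->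
      forall Z, c oA' oB' (coprod_map fA fB Z) = c oA oB Z).

Definition is_colimit (A B C : EA) (c : legs A B C) : Prop :=
  is_cocone c /\
  forall (X : EA) (x : legs A B X), is_cocone x ->
    exists u : C -> X,
      (ea_morph u /\ forall oA oB Z, u (c oA oB Z) = x oA oB Z) /\
      (forall v : C -> X, ea_morph v -> (forall oA oB Z, v (c oA oB Z) = x oA oB Z) ->
         forall y, v y = u y).

Definition bimorph (A B C : EA) (h : A -> B -> C) : Prop :=
  h (ea_one A) (ea_one B) = ea_one C /\
  (forall b a1 a2 a, ea_sum A a1 a2 = Some a -> ea_sum C (h a1 b) (h a2 b) = Some (h a b)) /\
  (forall a b1 b2 b, ea_sum B b1 b2 = Some b -> ea_sum C (h a b1) (h a b2) = Some (h a b)).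

Definition is_tensor (A B T : EA) (t : A -> B -> T) : Prop :=
  bimorph t /\
  forall (X : EA) (h : A -> B -> X), bimorph h ->
    exists f : T -> X,
      (ea_morph f /\ forall a b, f (t a b) = h a b) /\
      (forall g : T -> X, ea_morph g -> (forall a b, g (t a b) = h a b) ->
         forall y, g y = f y).

(* Main.v *)
Require Import Defs.
From mathcomp Require Import all_boot.
From Stdlib Require Import ClassicalEpsilon FunctionalExtensionality PropExtensionality ProofIrrelevance.
Set Implicit Arguments. Unset Strict Implicit. Unset Printing Implicit Defensive.


Section EAgen.
Variable X : EA.
Local Notation sm := (ea_sum X).
Local Notation z0 := (ea_zero X).
Local Notation o1 := (ea_one X).

Definition orth (a : X) : X :=
  proj1_sig (constructive_indefinite_description _ (ea_orth a)).

Lemma orthP a : sm a (orth a) = Some o1.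
Proof. rewrite /orth; case: constructive_indefinite_description => b /= [hb _] //. Qed.

Lemma orthU a b : sm a b = Some o1 -> b = orth a.
Proof.
rewrite /orth; case: constructive_indefinite_description => c /= [hc u] hb.
by rewrite (u b hb).
Qed.

Lemma sum10 : sm o1 z0 = Some o1.
Proof.
have h := orthP o1. have e : orth o1 = z0.
  by apply: (@ea_zo X _ o1); rewrite ea_comm.
by rewrite -e.
Qed.

Lemma sum0 a : sm a z0 = Some a.
Proof.
have h1 : sm (orth a) a = Some o1 by rewrite ea_comm orthP.
have [ac [h2 h3]] := ea_assoc h1 sum10.
have e1 := orthU h1; have e2 := orthU h3.
by rewrite h2 -(e1) in e2 *; rewrite e2.
Qed.

Lemma sum0l a c : sm z0 a = Some c -> c = a.
Proof. by rewrite ea_comm sum0 => -[]. Qed.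

Lemma assocR a b c bc abc : sm b c = Some bc -> sm a bc = Some abc ->
  exists ab, sm a b = Some ab /\ sm ab c = Some abc.
Proof.
rewrite ea_comm => h1; rewrite ea_comm => h2.
have [ba [h3 h4]] := ea_assoc h1 h2.
by exists ba; rewrite ea_comm h3 ea_comm h4.
Qed.

Lemma opt_ext (T : Type) (o1 o2 : option T) :
  (forall z, o1 = Some z <-> o2 = Some z) -> o1 = o2.
Proof.
case: o1 => [x|]; case: o2 => [y|] // h.
- by case: (h x) => /(_ erefl) [->].
- by case: (h x) => /(_ erefl).
- by case: (h y) => _ /(_ erefl).
Qed.

Definition fsum (s : seq X) : option X :=
  foldr (fun x acc => obind (fun y => sm x y) acc) (Some z0) s.

Lemma fsum_cons x s : fsum (x :: s) = obind (fun y => sm x y) (fsum s).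
Proof. by []. Qed.

Lemma fsum_cat s t z : fsum (s ++ t) = Some z <->
  exists x y, fsum s = Some x /\ fsum t = Some y /\ sm x y = Some z.
Proof.
elim: s z => [|a s IH] z /=.
  split => [h|[x [y [[<-] [h1 h2]]]]]; first by exists z0, z; rewrite ea_comm sum0.
  by rewrite h1 (sum0l h2).
split.
  case e: (fsum (s ++ t)) => [w|] //= h.
  have [x [y [h1 [h2 h3]]]] := (IH w).1 e.
  have [ab [h4 h5]] := assocR h3 h.
  by exists ab, y; rewrite h1 /= h4.
move=> [x' [y [h1 [h2 h3]]]].
case e: (fsum s) h1 => [x|] //= h1.
have [w [h4 h5]] := ea_assoc h1 h3.
have -> : fsum (s ++ t) = Some w by apply/IH; exists x, y.
by [].
Qed.

Lemma fsum_catC s t : fsum (s ++ t) = fsum (t ++ s).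
Proof.
apply: opt_ext => z; rewrite !fsum_cat.
by split => -[x [y [h1 [h2 h3]]]]; exists y, x; rewrite ea_comm.
Qed.

Lemma fsum_perm (K : eqType) (w : K -> X) (s t : seq K) :
  perm_eq s t -> fsum (map w s) = fsum (map w t).
Proof.
elim: s t => [|x s IH] t.
  by rewrite perm_sym => /perm_nilP ->.
move=> pst.
have xt : x \in t by rewrite -(perm_mem pst) mem_head.
move: pst; case/splitPr: xt => t1 t2 pst.
have p2 : perm_eq s (t1 ++ t2).
  by rewrite -(perm_cons x); apply: (perm_trans pst); by rewrite -[x :: t2]cat1s perm_catCA.
rewrite map_cat fsum_catC /= (IH _ p2) map_cat fsum_catC.
by [].
Qed.

Definition S (K : finType) (w : K -> X) (Z : {set K}) := fsum [seq w i | i <- enum Z].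

Lemma perm_enumU (K : finType) (Z1 Z2 : {set K}) : Z1 :&: Z2 == set0 ->
  perm_eq (enum (Z1 :|: Z2)) (enum Z1 ++ enum Z2).
Proof.
move/setI0P => d; apply: uniq_perm; first exact: enum_uniq.
  rewrite cat_uniq !enum_uniq /= andbT; apply/hasPn => x; rewrite !mem_enum => x2.
  by apply/negP => x1; apply: (d x).
by move=> x; rewrite mem_cat !mem_enum in_setU.
Qed.

Lemma S_U (K : finType) (w : K -> X) Z1 Z2 z : Z1 :&: Z2 == set0 ->
  S w (Z1 :|: Z2) = Some z <->
  exists x y, S w Z1 = Some x /\ S w Z2 = Some y /\ sm x y = Some z.
Proof.
move=> d; rewrite /S (fsum_perm w (perm_enumU d)) map_cat; exact: fsum_cat.
Qed.

Lemma S0 (K : finType) (w : K -> X) : S w set0 = Some z0.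
Proof. by rewrite /S enum_set0. Qed.

Lemma S1 (K : finType) (w : K -> X) k : S w [set k] = Some (w k).
Proof. by rewrite /S enum_set1 /= sum0. Qed.

Lemma S_def (K : finType) (w : K -> X) Z t : S w setT = Some t -> exists x, S w Z = Some x.
Proof.
rewrite -(setUCr Z) => /S_U.
have d : Z :&: ~: Z == set0 by rewrite setICr.
by case/(_ d) => x [y [h _]]; exists x.
Qed.

Definition Sf (K : finType) (w : K -> X) (Z : {set K}) := odflt z0 (S w Z).

Lemma SfE (K : finType) (w : K -> X) Z t : S w setT = Some t -> S w Z = Some (Sf w Z).
Proof. by move=> /(S_def Z) [x hx]; rewrite /Sf hx. Qed.

End EAgen.

Lemma bool_sumE (T : finType) (X Y Z : {set T}) :
  bool_sum X Y = Some Z -> X :&: Y == set0 /\ Z = X :|: Y.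
Proof. by rewrite /bool_sum; case: ifP => // h [<-]. Qed.

Lemma bool_sumI (T : finType) (X Y : {set T}) :
  X :&: Y == set0 -> bool_sum X Y = Some (X :|: Y).
Proof. by rewrite /bool_sum => ->. Qed.

Lemma Sf_morph (X : EA) (K : finType) (w : K -> X) :
  S w setT = Some (ea_one X) -> @ea_morph (bool_ea K) X (Sf w).
Proof.
move=> h; split; first by rewrite /Sf /= h.
move=> Z1 Z2 Z /bool_sumE [d ->] /=.
have := SfE (Z1 :|: Z2) h; case/(@S_U _ _ w Z1 Z2 _ d) => x [y [h1 [h2 h3]]].
by move: (SfE Z1 h) (SfE Z2 h); rewrite h1 h2 => -[<-] [<-].
Qed.

Lemma Sf1 (X : EA) (K : finType) (w : K -> X) k : Sf w [set k] = w k.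
Proof. by rewrite /Sf S1. Qed.

Lemma set_ind (K : finType) (P : {set K} -> Prop) :
  P set0 -> (forall k, P [set k]) ->
  (forall Z1 Z2, Z1 :&: Z2 == set0 -> P Z1 -> P Z2 -> P (Z1 :|: Z2)) ->
  forall Z, P Z.
Proof.
move=> h0 h1 hU Z; rewrite -[Z]set_enum.
elim: (enum Z) => [|x s IH].
  by have -> : [set x in [::]] = set0 :> {set K} by apply/setP => y; rewrite !inE.
case xs: (x \in s).
  have -> : [set y in x :: s] = [set y in s] by apply/setP => y; rewrite !inE; case: eqP => // ->.
  by [].
have -> : [set y in x :: s] = [set x] :|: [set y in s] by apply/setP => y; rewrite !inE.
apply: hU => //; apply/setI0P => y; rewrite !inE => /eqP -> ; by rewrite xs.
Qed.

Section Morph.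
Variables X Y : EA.
Variable g : X -> Y.
Hypothesis gm : ea_morph g.

Lemma morph0 : g (ea_zero X) = ea_zero Y.
Proof.
have h := gm.2 _ _ _ (sum10 X); rewrite ea_comm gm.1 in h.
by apply: (@ea_zo Y _ _ h).
Qed.

Lemma morph_orth a : g (orth a) = orth (g a).
Proof. by apply: orthU; rewrite -gm.1; apply: gm.2; apply: orthP. Qed.

Lemma morph_fsum s z : fsum s = Some z -> fsum (map g s) = Some (g z).
Proof.
elim: s z => [|x s IH] z /=; first by move=> [<-]; rewrite morph0.
by case e: (fsum s) => [y|] //= h; rewrite (IH _ e) /=; apply: gm.2.
Qed.
End Morph.


Section Tensor.
Variables A B : EA.

Inductive term : Type :=
 | G (a : A) (b : B) | TZ | TO | TOr (t : term) | TP (t u : term).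

Inductive E : term -> term -> Prop :=
 | E_G a b : E (G a b) (G a b)
 | E_Z : E TZ TZ
 | E_O : E TO TO
 | E_sym t u : E t u -> E u t
 | E_trans t u v : E t u -> E u v -> E t v
 | E_Or t u : E t u -> E (TOr t) (TOr u)
 | E_Ori t u : E (TOr t) u -> E t t
 | E_P t t' u u' v : E t t' -> E u u' -> E (TP t u) v -> E (TP t' u') v
 | E_Pl t u v : E (TP t u) v -> E t t
 | E_Pr t u v : E (TP t u) v -> E u u
 | E_orth t : E t t -> E (TP t (TOr t)) TO
 | E_orthu t u : E (TP t u) TO -> E u (TOr t)
 | E_zo t x : E (TP t TO) x -> E t TZ
 | E_comm t u v : E (TP t u) v -> E (TP u t) v
 | E_assoc1 t u v w x : E (TP t u) v -> E (TP v w) x -> E (TP u w) (TP u w)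
 | E_assoc2 t u v w x : E (TP t u) v -> E (TP v w) x -> E (TP t (TP u w)) x
 | E_one : E (G (ea_one A) (ea_one B)) TO
 | E_addl b a1 a2 a : ea_sum A a1 a2 = Some a -> E (TP (G a1 b) (G a2 b)) (G a b)
 | E_addr a b1 b2 b : ea_sum B b1 b2 = Some b -> E (TP (G a b1) (G a b2)) (G a b).

Lemma E_refl_r t u : E t u -> E u u.
Proof. by move=> h; apply: E_trans (E_sym h) h. Qed.
Lemma E_refl_l t u : E t u -> E t t.
Proof. by move=> h; apply: E_trans h (E_sym h). Qed.

Definition Et (t : term) : term -> Prop :=
  if excluded_middle_informative (E t t) then E t else E TZ.

Lemma EtE t : E t t -> Et t = E t.
Proof. by rewrite /Et; case: excluded_middle_informative. Qed.

Lemma Et_ok t : exists u, E u u /\ Et t = E u.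
Proof.
rewrite /Et; case: excluded_middle_informative => h; first by exists t.
by exists TZ; split => //; exact: E_Z.
Qed.

Definition car := {P : term -> Prop | exists u, E u u /\ P = E u}.

Definition cls (t : term) : car := exist _ (Et t) (Et_ok t).

Lemma cls_eq t u : E t t -> E u u -> (cls t = cls u <-> E t u).
Proof.
move=> ht hu; split.
  move/(congr1 (@proj1_sig _ _)) => /=; rewrite !EtE // => e.
  by rewrite e.
move=> htu; apply: eq_sig_hprop => /=; first by move=> *; apply: proof_irrelevance.
rewrite !EtE //; apply: functional_extensionality => v.
apply: propositional_extensionality; split => h.
  exact: E_trans (E_sym htu) h.
exact: E_trans htu h.
Qed.

Lemma clsP (P : car) : exists t, E t t /\ P = cls t.
Proof.
case: P => P [u [hu eP]]; exists u; split => //.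
apply: eq_sig_hprop => /=; first by move=> *; apply: proof_irrelevance.
by rewrite EtE.
Qed.

Definition rel (P Q R : car) : Prop :=
  exists t u v, P = cls t /\ Q = cls u /\ R = cls v /\ E (TP t u) v.

Lemma rel_fun P Q R1 R2 : rel P Q R1 -> rel P Q R2 -> R1 = R2.
Proof.
move=> [t1 [u1 [v1 [e1 [e2 [-> h1]]]]]] [t2 [u2 [v2 [e3 [e4 [-> h2]]]]]].
have ht := E_Pl h1; have hu := E_Pr h1.
have ht2 := E_Pl h2; have hu2 := E_Pr h2.
have tens : E t1 t2 by apply/cls_eq => //; rewrite -e1 -e3.
have uu : E u1 u2 by apply/cls_eq => //; rewrite -e2 -e4.
have h3 := E_P tens uu h1.
apply/cls_eq; [exact: E_refl_r h1 | exact: E_refl_r h2 |].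
exact: E_trans (E_sym h3) h2.
Qed.

Definition tsum (P Q : car) : option car :=
  match excluded_middle_informative (exists R, rel P Q R) with
  | left h => Some (proj1_sig (constructive_indefinite_description _ h))
  | right _ => None
  end.

Lemma tsumE P Q R : tsum P Q = Some R <-> rel P Q R.
Proof.
rewrite /tsum; case: excluded_middle_informative => h.
  case: constructive_indefinite_description => R' hR /=.
  by split => [[<-] //|hR']; rewrite (rel_fun hR hR').
by split => // hR; case: h; exists R.
Qed.

Lemma tsum_comm P Q : tsum P Q = tsum Q P.
Proof.
apply: opt_ext => R; rewrite !tsumE.
by split => -[t [u [v [e1 [e2 [e3 h]]]]]]; exists u, t, v; do !split => //; apply: E_comm.
Qed.

Lemma tsum_assoc a b c ab abc :
  tsum a b = Some ab -> tsum ab c = Some abc ->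
  exists bc, tsum b c = Some bc /\ tsum a bc = Some abc.
Proof.
move=> /tsumE [t [u [v [-> [-> [-> h1]]]]]] /tsumE [v' [w [x [e [-> [-> h2]]]]]].
have vv : E v v' by apply/cls_eq => //; [exact: E_refl_r h1 | exact: E_Pl h2].
have h3 : E (TP v w) x by apply: E_P (E_sym vv) (E_Pr h2) h2.
exists (cls (TP u w)); split; apply/tsumE.
  by exists u, w, (TP u w); do !split => //; apply: E_assoc1 h1 h3.
by exists t, (TP u w), x; do !split => //; apply: E_assoc2 h1 h3.
Qed.

Lemma tsum_orth a : exists! b, tsum a b = Some (cls TO).
Proof.
have [t [ht ->]] := clsP a.
exists (cls (TOr t)); split.
  by apply/tsumE; exists t, (TOr t), TO; do !split => //; apply: E_orth.
move=> b /tsumE [t' [u [v [e1 [-> [e2 h]]]]]].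
have tens : E t t' by apply/cls_eq => //; exact: E_Pl h.
have vO : E v TO by apply/cls_eq => //; [exact: E_refl_r h | exact: E_O].
have h2 : E u (TOr t') := E_orthu (E_trans h vO).
apply/cls_eq; [exact: E_Or ht | exact: E_refl_l h2 |].
exact: E_sym (E_trans h2 (E_sym (E_Or tens))).
Qed.

Lemma tsum_zo a x : tsum a (cls TO) = Some x -> a = cls TZ.
Proof.
move=> /tsumE [t [u [v [-> [e [_ h]]]]]].
have uO : E u TO by apply/cls_eq => //; [exact: E_Pr h | exact: E_O].
have h2 : E (TP t TO) v by apply: E_P (E_Pl h) uO h.
apply/cls_eq; [exact: E_Pl h | exact: E_Z | exact: E_zo h2].
Qed.

Definition TEA : EA := @MkEA car tsum (cls TZ) (cls TO) tsum_comm tsum_assoc tsum_orth tsum_zo.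

Definition tens (a : A) (b : B) : TEA := cls (G a b).

Lemma tt_bimorph : bimorph tens.
Proof.
split; first by apply/cls_eq; [exact: E_G | exact: E_O | exact: E_one].
split.
  move=> b a1 a2 a h; apply/tsumE; exists (G a1 b), (G a2 b), (G a b); do !split => //.
  exact: E_addl.
move=> a b1 b2 b h; apply/tsumE; exists (G a b1), (G a b2), (G a b); do !split => //.
exact: E_addr.
Qed.

End Tensor.
Arguments TO {A B}. Arguments TZ {A B}.

Section Univ.
Variables A B X : EA.
Variable h : A -> B -> X.
Hypothesis hb : bimorph h.

Fixpoint interp (t : term A B) : option X :=
  match t with
  | G a b => Some (h a b)
  | TZ => Some (ea_zero X)
  | TO => Some (ea_one X)
  | TOr t => omap (@orth X) (interp t)
  | TP t u => match interp t, interp u with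
              | Some x, Some y => ea_sum X x y
              | _, _ => None end
  end.

Lemma interp_sound t u : E t u -> exists x, interp t = Some x /\ interp u = Some x.
Proof.
elim => {t u} /=.
- by move=> a b; exists (h a b).
- by exists (ea_zero X).
- by exists (ea_one X).
- by move=> t u _ [x [h1 h2]]; exists x.
- by move=> t u v _ [x [h1 h2]] _ [y [h3 h4]]; exists x; rewrite h1 h4 -h2 -h3.
- by move=> t u _ [x [h1 h2]]; exists (orth x); rewrite h1 h2.
- by move=> t u _ [x [h1 _]]; case: (interp t) h1 => // y _; exists y.
- move=> t t' u u' v _ [x [h1 h2]] _ [y [h3 h4]] _ [z [h5 h6]].
  exists z; split => //=; rewrite h2 h4; move: h5 => /=; by rewrite h1 h3.
- move=> t u v _ [z [h1 _]]; move: h1.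
  by case: (interp t) => // x; case: (interp u) => // y _; exists x.
- move=> t u v _ [z [h1 _]]; move: h1.
  by case: (interp t) => // x; case: (interp u) => // y _; exists y.
- move=> t _ [x [h1 _]]; exists (ea_one X); split => //; rewrite h1 /=; exact: orthP.
- move=> t u _ [z [h1 [e]]]; move: h1; rewrite -e.
  case: (interp t) => // x; case: (interp u) => // y h1.
  by exists y; rewrite (orthU h1).
- move=> t x _ [z [h1 _]]; exists (ea_zero X); split => //; move: h1.
  by case: (interp t) => // y h1; rewrite (ea_zo h1).
- move=> t u v _ [z [h1 h2]]; exists z; split => //; move: h1.
  by case: (interp t) => // x; case: (interp u) => // y; rewrite ea_comm.
- move=> t u v w x _ [z1 [h1 h2]] _ [z2 [h3 h4]]; move: h1 h3; rewrite h2 /=.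
  case: (interp t) => // a; case: (interp u) => // b; case: (interp w) => // c.
  by move=> h1 h3; have [bc [h5 _]] := ea_assoc h1 h3; exists bc; rewrite h5.
- move=> t u v w x _ [z1 [h1 h2]] _ [z2 [h3 h4]]; move: h1 h3; rewrite h2 /=.
  case: (interp t) => // a; case: (interp u) => // b; case: (interp w) => // c.
  by move=> h1 h3; have [bc [h5 h6]] := ea_assoc h1 h3; exists z2; rewrite h5 h6.
- by exists (ea_one X); rewrite hb.1.
- by move=> b a1 a2 a e; exists (h a b); rewrite (hb.2.1 _ _ _ _ e).
- by move=> a b1 b2 b e; exists (h a b); rewrite (hb.2.2 _ _ _ _ e).
Qed.

Definition rep (P : car A B) : term A B :=
  proj1_sig (constructive_indefinite_description _ (clsP P)).

Lemma repP P : E (rep P) (rep P) /\ P = cls (rep P).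
Proof. by rewrite /rep; case: constructive_indefinite_description. Qed.

Definition uf (P : TEA A B) : X := odflt (ea_zero X) (interp (rep P)).

Lemma uf_cls t : E t t -> interp t = Some (uf (cls t)).
Proof.
move=> ht; rewrite /uf.
have [h1 h2] := repP (cls t).
have e : E t (rep (cls t)) by apply/cls_eq.
by have [x [-> ->]] := interp_sound e.
Qed.

Lemma uf_morph : ea_morph uf.
Proof.
split.
  by have := uf_cls (@E_O A B) => /= -[].
move=> P Q R /tsumE [t [u [v [-> [-> [-> e]]]]]].
have [x [h1 h2]] := interp_sound e.
move: h1 => /=; rewrite (uf_cls (E_Pl e)) (uf_cls (E_Pr e)) => ->.
by rewrite (uf_cls (E_refl_r e)) in h2.
Qed.

Lemma uf_tt a b : uf (tens a b) = h a b.
Proof. by have := uf_cls (E_G a b) => /= -[]. Qed.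

Lemma uf_unique (g : TEA A B -> X) : ea_morph g -> (forall a b, g (tens a b) = h a b) ->
  forall y, g y = uf y.
Proof.
move=> gm gt.
have key : forall t, E t t -> interp t = Some (g (cls t)).
  elim => /=.
  - by move=> a b _; rewrite -gt.
  - by move=> _; rewrite -(morph0 gm).
  - by move=> _; rewrite gm.1.
  - move=> t IH e; have et := E_Ori e; rewrite IH //=.
    congr Some; rewrite -(morph_orth gm); congr g.
    apply: esym; apply: orthU; apply/tsumE.
    by exists t, (TOr t), TO; do !split => //; apply: E_orth.
  - move=> t IHt u IHu e; rewrite IHt ?IHu; [|exact: E_Pr e|exact: E_Pl e].
    apply: gm.2; apply/tsumE; exists t, u, (TP t u); do !split => //.
move=> y; have [t [ht ->]] := clsP y.
by have := uf_cls ht; rewrite key // => -[].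
Qed.

Lemma TEA_tensor : is_tensor (@tens A B).
Abort.
End Univ.

Lemma TEA_tensor (A B : EA) : is_tensor (@tens A B).
Proof.
split; first exact: tt_bimorph.
move=> X h hb; exists (uf h); split.
  by split; [exact: uf_morph | exact: uf_tt].
by move=> g gm gt y; apply: uf_unique.
Qed.


Section More.
Variable X : EA.
Local Notation sm := (ea_sum X).
Local Notation z0 := (ea_zero X).
Local Notation o1 := (ea_one X).

Lemma sum_id0 x y : sm x y = Some y -> x = z0.
Proof.
move=> h; have h2 := orthP y.
have [bc [h3 h4]] := ea_assoc h h2.
have e : bc = o1 by move: h3; rewrite h2 => -[].
by rewrite e in h4; apply: (ea_zo h4).
Qed.
End More.

Lemma orth1 (X : EA) : orth (ea_one X) = ea_zero X.
Proof. by apply: esym; apply: orthU; apply: sum10. Qed.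

Definition additive (X : EA) (K : finType) (f : {set K} -> X) :=
  f set0 = ea_zero X /\ forall Z1 Z2, Z1 :&: Z2 == set0 ->
    ea_sum X (f Z1) (f Z2) = Some (f (Z1 :|: Z2)).

Lemma morph_add (X : EA) (K : finType) (f : {set K} -> X) :
  @ea_morph (bool_ea K) X f -> additive f.
Proof.
move=> fm; split; first exact: (morph0 fm).
by move=> Z1 Z2 d; apply: fm.2; apply: bool_sumI.
Qed.

Lemma add_ext (X : EA) (K : finType) (f1 f2 : {set K} -> X) :
  additive f1 -> additive f2 -> (forall k, f1 [set k] = f2 [set k]) -> forall Z, f1 Z = f2 Z.
Proof.
move=> [h10 h1] [h20 h2] hk; apply: set_ind => //; first by rewrite h10 h20.
move=> Z1 Z2 d e1 e2.
by have := h1 _ _ d; rewrite e1 e2 h2 // => -[].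
Qed.

Lemma setX0l (T U : finType) (V : {set U}) : setX (set0 : {set T}) V = set0.
Proof. by apply/setP => -[x y]; rewrite !inE. Qed.
Lemma setX0r (T U : finType) (V : {set T}) : setX V (set0 : {set U}) = set0.
Proof. by apply/setP => -[x y]; rewrite !inE andbF. Qed.
Lemma setX11 (T U : finType) (a : T) (b : U) : setX [set a] [set b] = [set (a, b)].
Proof. by apply/setP => -[x y]; rewrite !inE xpair_eqE. Qed.
Lemma setXUl (T U : finType) (V1 V2 : {set T}) (W : {set U}) :
  setX (V1 :|: V2) W = setX V1 W :|: setX V2 W.
Proof. by apply/setP => -[x y]; rewrite !inE andb_orl. Qed.
Lemma setXUr (T U : finType) (V : {set T}) (W1 W2 : {set U}) :
  setX V (W1 :|: W2) = setX V W1 :|: setX V W2.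
Proof. by apply/setP => -[x y]; rewrite !inE andb_orr. Qed.
Lemma setXdl (T U : finType) (V1 V2 : {set T}) (W : {set U}) :
  V1 :&: V2 == set0 -> setX V1 W :&: setX V2 W == set0.
Proof.
move/setI0P => d; apply/setI0P => -[x y]; rewrite !inE => /andP[x1 _] /andP[x2 _].
exact: d x1 x2.
Qed.
Lemma setXdr (T U : finType) (V : {set T}) (W1 W2 : {set U}) :
  W1 :&: W2 == set0 -> setX V W1 :&: setX V W2 == set0.
Proof.
move/setI0P => d; apply/setI0P => -[x y]; rewrite !inE => /andP[_ x1] /andP[_ x2].
exact: d x1 x2.
Qed.

Section Bim.
Variables A B X : EA.
Variable h : A -> B -> X.
Hypothesis hb : bimorph h.

Lemma h0l b : h (ea_zero A) b = ea_zero X.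
Proof.
apply: (@sum_id0 X _ (h (ea_one A) b)); apply: hb.2.1.
by rewrite ea_comm; apply: sum10.
Qed.
Lemma h0r a : h a (ea_zero B) = ea_zero X.
Proof.
apply: (@sum_id0 X _ (h a (ea_one B))); apply: hb.2.2.
by rewrite ea_comm; apply: sum10.
Qed.

Variables (oA : RObj A) (oB : RObj B).
Definition Lw (p : 'I_(r_n oA) * 'I_(r_n oB)) : X :=
  h (r_g oA [set p.1]) (r_g oB [set p.2]).

Lemma rect U V : S Lw (setX U V) = Some (h (r_g oA U) (r_g oB V)).
Proof.
have gA := r_g_morph oA; have gB := r_g_morph oB.
move: U V; apply: set_ind.
- by move=> V; rewrite setX0l S0 (morph0 gA) h0l.
- move=> k; apply: set_ind.
  + by rewrite setX0r S0 (morph0 gB) h0r.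
  + by move=> l; rewrite setX11 S1.
  + move=> V1 V2 d e1 e2; rewrite setXUr.
    apply/(S_U _ _ (setXdr _ d)); do 2 eexists; split; first exact: e1.
    split; first exact: e2.
    by apply: hb.2.2; apply: gB.2; apply: bool_sumI.
- move=> U1 U2 d e1 e2 V; rewrite setXUl.
  apply/(S_U _ _ (setXdl _ d)); do 2 eexists; split; first exact: e1.
  split; first exact: e2.
  by apply: hb.2.1; apply: gA.2; apply: bool_sumI.
Qed.

Definition L : {set 'I_(r_n oA) * 'I_(r_n oB)} -> X := Sf Lw.

Lemma L_tot : S Lw setT = Some (ea_one X).
Proof.
have -> : [set: 'I_(r_n oA) * 'I_(r_n oB)] = setX setT setT by apply/setP => -[x y]; rewrite !inE.
by rewrite rect (r_g_morph oA).1 (r_g_morph oB).1 hb.1.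
Qed.

Lemma L_morph : @ea_morph (bool_ea _) X L.
Proof. exact: Sf_morph L_tot. Qed.

Lemma L_rect U V : L (setX U V) = h (r_g oA U) (r_g oB V).
Proof. by rewrite /L /Sf rect. Qed.

Lemma L1 p : L [set p] = Lw p.
Proof. exact: Sf1. Qed.
End Bim.
Arguments L {A B X} h oA oB _.
Arguments Lw {A B X} h oA oB p.

Lemma ba_disj1 (T U : finType) (f : {set T} -> {set U}) a b :
  ba_morph f -> a != b -> f [set a] :&: f [set b] = set0.
Proof.
move=> [f0 _ _ fI _] ab; rewrite -fI.
have -> : [set a] :&: [set b] = set0.
  apply/setP => x; rewrite !inE; case: eqP => // ->; by rewrite (negbTE ab).
exact: f0.
Qed.

Section Nat.
Variables (n n' m m' : nat).
Variables (fA : {set 'I_n} -> {set 'I_n'}) (fB : {set 'I_m} -> {set 'I_m'}).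
Hypotheses (hA : ba_morph fA) (hB : ba_morph fB).

Lemma cm0 : coprod_map fA fB set0 = set0.
Proof. by rewrite /coprod_map big_set0. Qed.
Lemma cmU Z1 Z2 : coprod_map fA fB (Z1 :|: Z2) = coprod_map fA fB Z1 :|: coprod_map fA fB Z2.
Proof. by rewrite /coprod_map bigcup_setU. Qed.
Lemma cm1 p : coprod_map fA fB [set p] = setX (fA [set p.1]) (fB [set p.2]).
Proof. by rewrite /coprod_map big_set1. Qed.
Lemma cmd Z1 Z2 : Z1 :&: Z2 == set0 -> coprod_map fA fB Z1 :&: coprod_map fA fB Z2 == set0.
Proof.
move/setI0P => d; apply/setI0P => -[x y] /bigcupP [p p1 hp] /bigcupP [q q2 hq].
have pq : p != q by apply/eqP => e; subst q; exact: d p p1 q2.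
move: hp hq; rewrite !inE => /andP [xp yp] /andP [xq yq].
case: (eqVneq p.1 q.1) => e1.
  case: (eqVneq p.2 q.2) => e2.
    by move: pq; case: p q e1 e2 {p1 q2 xp yp xq yq} => ? ? [? ?] /= -> ->; rewrite eqxx.
  have := ba_disj1 hB e2; move/setP/(_ y); by rewrite !inE yp yq.
have := ba_disj1 hA e1; move/setP/(_ x); by rewrite !inE xp xq.
Qed.
End Nat.

Lemma L_nat (A B X : EA) (h : A -> B -> X) (hb : bimorph h)
  (oA oA' : RObj A) (oB oB' : RObj B) fA fB :
  RArrow oA oA' fA -> RArrow oB oB' fB ->
  forall Z, L h oA' oB' (coprod_map fA fB Z) = L h oA oB Z.
Proof.
move=> [bA eA] [bB eB]; apply: add_ext; last 1 first.
- by move=> p; rewrite cm1 L_rect // L1 /Lw eA eB.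
- have Lm := L_morph hb oA' oB'.
  split; first by rewrite cm0 (morph0 Lm).
  by move=> Z1 Z2 d; rewrite cmU; apply: Lm.2; apply: bool_sumI; apply: cmd.
- exact: morph_add (L_morph hb oA oB).
Qed.


Definition wseq (A : EA) (s : seq A) : 'I_(size s) -> A := fun i => nth (ea_zero A) s i.
Arguments wseq {A} s _.

Lemma S_seq (A : EA) (s : seq A) : S (wseq s) setT = fsum s.
Proof.
have p : perm_eq (enum [set: 'I_(size s)]) (ord_enum (size s)).
  apply: uniq_perm; [exact: enum_uniq | exact: ord_enum_uniq |].
  by move=> x; rewrite mem_enum inE mem_ord_enum.
rewrite /S (fsum_perm _ p); congr fsum.
by rewrite -[in RHS](mkseq_nth (ea_zero A) s) /mkseq -val_ord_enum -map_comp.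
Qed.

Definition objS (A : EA) (s : seq A) (H : fsum s = Some (ea_one A)) : RObj A :=
  @MkRObj A (size s) (Sf (wseq s)) (Sf_morph (etrans (S_seq s) H)).

Lemma objS1 (A : EA) (s : seq A) (H : fsum s = Some (ea_one A)) k :
  r_g (objS H) [set k] = nth (ea_zero A) s k.
Proof. exact: Sf1. Qed.

Definition pre (T U : finType) (psi : U -> T) (Z : {set T}) : {set U} := psi @^-1: Z.

Lemma pre_ba (T U : finType) (psi : U -> T) : ba_morph (pre psi).
Proof.
split; rewrite /pre.
- exact: preimset0.
- exact: preimsetT.
- by move=> *; rewrite preimsetU.
- by move=> *; rewrite preimsetI.
- by move=> *; rewrite preimsetC.
Qed.

Lemma pre_arrow (A : EA) (o o' : RObj A) (psi : 'I_(r_n o') -> 'I_(r_n o)) :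
  (forall k, r_g o' (pre psi [set k]) = r_g o [set k]) -> RArrow o o' (pre psi).
Proof.
move=> hk; split; first exact: pre_ba.
apply: add_ext => //; last exact: morph_add (r_g_morph o).
have m := r_g_morph o'; split; first by rewrite /pre preimset0 (morph0 m).
move=> Z1 Z2 d; rewrite /pre preimsetU; apply: m.2; apply: bool_sumI.
by rewrite -preimsetI (eqP d) preimset0.
Qed.

Lemma orth_bool (T : finType) (Z : {set T}) : @orth (bool_ea T) Z = ~: Z.
Proof. by apply: esym; apply: orthU => /=; rewrite /bool_sum setICr eqxx setUCr. Qed.

Definition j1 : 'I_2 := @Ordinal 2 1 isT.
Definition k1 : 'I_3 := @Ordinal 3 1 isT.
Definition k2 : 'I_3 := @Ordinal 3 2 isT.

Lemma I2P (k : 'I_2) : k = ord0 \/ k = j1.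
Proof. by case: k => [[|[|k]] Hk]; [left|right|]; try apply: val_inj. Qed.
Lemma I3P (k : 'I_3) : [\/ k = ord0, k = k1 | k = k2].
Proof. by case: k => [[|[|[|k]]] Hk]; [apply: Or31|apply: Or32|apply: Or33|]; try apply: val_inj. Qed.

Section Objs.
Variable A : EA.
Local Notation sm := (ea_sum A).

Lemma fsum2 a : fsum [:: a; orth a] = Some (ea_one A).
Proof. by rewrite /= sum0 /= orthP. Qed.
Definition o2 a := objS (fsum2 a).

Lemma fsum1 : fsum [:: ea_one A] = Some (ea_one A).
Proof. by rewrite /= sum0. Qed.
Definition o1 := objS fsum1.

Variables (a1 a2 a : A) (e : sm a1 a2 = Some a).
Definition bc3 := proj1_sig (constructive_indefinite_description _ (ea_assoc e (orthP a))).
Lemma bc3P : sm a2 (orth a) = Some bc3 /\ sm a1 bc3 = Some (ea_one A).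
Proof. by rewrite /bc3; case: constructive_indefinite_description. Qed.

Lemma fsum3 : fsum [:: a1; a2; orth a] = Some (ea_one A).
Proof. by rewrite /= sum0 /= bc3P.1 /= bc3P.2. Qed.
Definition o3 := objS fsum3.
End Objs.

Lemma g_union (A : EA) (o : RObj A) Z1 Z2 x : Z1 :&: Z2 == set0 ->
  ea_sum A (r_g o Z1) (r_g o Z2) = Some x -> r_g o (Z1 :|: Z2) = x.
Proof.
move=> d; rewrite ((r_g_morph o).2 _ _ _ (bool_sumI d)) => -[] //.
Qed.

Definition psi1 (k : 'I_1) : 'I_2 := ord0.
Definition psa (k : 'I_3) : 'I_2 := if val k < 2 then ord0 else j1.
Definition ps1 (k : 'I_3) : 'I_2 := if val k == 0 then ord0 else j1.
Definition ps2 (k : 'I_3) : 'I_2 := if val k == 1 then ord0 else j1.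

Lemma pre_psi1_0 : pre psi1 [set ord0] = setT.
Proof. by apply/setP => x; rewrite !inE. Qed.
Lemma pre_psi1_1 : pre psi1 [set j1] = set0.
Proof. by apply/setP => x; rewrite !inE. Qed.
Lemma pre_psa_0 : pre psa [set ord0] = [set ord0] :|: [set k1].
Proof. by apply/setP => x; rewrite !inE; case: (I3P x) => ->. Qed.
Lemma pre_psa_1 : pre psa [set j1] = [set k2].
Proof. by apply/setP => x; rewrite !inE; case: (I3P x) => ->. Qed.
Lemma pre_ps1_0 : pre ps1 [set ord0] = [set ord0].
Proof. by apply/setP => x; rewrite !inE; case: (I3P x) => ->. Qed.
Lemma pre_ps1_1 : pre ps1 [set j1] = [set k1] :|: [set k2].
Proof. by apply/setP => x; rewrite !inE; case: (I3P x) => ->. Qed.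
Lemma pre_ps2_0 : pre ps2 [set ord0] = [set k1].
Proof. by apply/setP => x; rewrite !inE; case: (I3P x) => ->. Qed.
Lemma pre_ps2_1 : pre ps2 [set j1] = [set ord0] :|: [set k2].
Proof. by apply/setP => x; rewrite !inE; case: (I3P x) => ->. Qed.
Lemma pre_id (n : nat) (k : 'I_n) : pre id [set k] = [set k].
Proof. by apply/setP => x; rewrite !inE. Qed.

Lemma d01 : [set ord0] :&: [set k1] == set0.
Proof. by apply/eqP/setP => x; rewrite !inE; case: (I3P x) => ->. Qed.
Lemma d12 : [set k1] :&: [set k2] == set0.
Proof. by apply/eqP/setP => x; rewrite !inE; case: (I3P x) => ->. Qed.
Lemma d02 : [set ord0] :&: [set k2] == set0.
Proof. by apply/eqP/setP => x; rewrite !inE; case: (I3P x) => ->. Qed.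

Section Arrows.
Variable A : EA.

Lemma arr_id (o : RObj A) : RArrow o o (pre id).
Proof. by apply: pre_arrow => k; rewrite pre_id. Qed.

Lemma arr_one : RArrow (o2 (ea_one A)) (o1 A) (pre psi1).
Proof.
apply: pre_arrow => k; rewrite objS1; case: (I2P k) => -> /=.
  rewrite pre_psi1_0; exact: (r_g_morph (o1 A)).1.
by rewrite pre_psi1_1 orth1; exact: (morph0 (r_g_morph (o1 A))).
Qed.

Variables (a1 a2 a : A) (e : ea_sum A a1 a2 = Some a).

Lemma arr_a : RArrow (o2 a) (o3 e) (pre psa).
Proof.
apply: pre_arrow => k; rewrite objS1; case: (I2P k) => ->.
  by rewrite pre_psa_0; apply: g_union; [exact: d01 | rewrite !objS1 /=].
by rewrite pre_psa_1 objS1.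
Qed.

Lemma arr_a1 : RArrow (o2 a1) (o3 e) (pre ps1).
Proof.
apply: pre_arrow => k; rewrite objS1; case: (I2P k) => ->.
  by rewrite pre_ps1_0 objS1.
rewrite pre_ps1_1; apply: g_union; first exact: d12.
rewrite !objS1 /= (bc3P e).1; congr Some; apply: orthU; exact: (bc3P e).2.
Qed.

Lemma arr_a2 : RArrow (o2 a2) (o3 e) (pre ps2).
Proof.
apply: pre_arrow => k; rewrite objS1; case: (I2P k) => ->.
  by rewrite pre_ps2_0 objS1.
rewrite pre_ps2_1; apply: g_union; first exact: d02.
have e' : ea_sum A a2 a1 = Some a by rewrite ea_comm.
have [d [h1 h2]] := ea_assoc e' (orthP a).
by rewrite !objS1 /= h1; congr Some; apply: orthU.
Qed.
End Arrows.

Section Cocone.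
Variables A B X : EA.
Local Unset Implicit Arguments.
Variable y : legs A B X.
Local Set Implicit Arguments.
Hypothesis hy : is_cocone y.

Definition hyf (a : A) (b : B) : X := y (o2 a) (o2 b) [set (ord0, ord0)].

Lemma ymorph oA oB : @ea_morph (bool_ea _) X (y oA oB).
Proof. exact: hy.1. Qed.

Lemma hyf_one : hyf (ea_one A) (ea_one B) = ea_one X.
Proof.
rewrite /hyf -(hy.2 _ _ _ _ _ _ (arr_one A) (arr_one B)) cm1 /=.
rewrite (_ : setX _ _ = setT); last by apply/setP => -[? ?]; rewrite !inE.
exact: (ymorph _ _).1.
Qed.

Lemma dd1 (n : nat) : [set (ord0 : 'I_3, ord0 : 'I_n.+1)] :&: [set (k1, ord0)] == set0.
Proof. by apply/eqP/setP => -[x z]; rewrite !inE !xpair_eqE; case: (I3P x) => ->; rewrite ?andbF. Qed.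
Lemma dd2 (n : nat) : [set (ord0 : 'I_n.+1, ord0 : 'I_3)] :&: [set (ord0, k1)] == set0.
Proof. by apply/eqP/setP => -[z x]; rewrite !inE !xpair_eqE; case: (I3P x) => ->; rewrite ?andbF. Qed.

Lemma hyf_addl b a1 a2 a : ea_sum A a1 a2 = Some a ->
  ea_sum X (hyf a1 b) (hyf a2 b) = Some (hyf a b).
Proof.
move=> e; rewrite /hyf.
rewrite -(hy.2 _ _ _ _ _ _ (arr_a e) (arr_id (o2 b))) cm1 /= pre_psa_0 pre_id.
rewrite -(hy.2 _ _ _ _ _ _ (arr_a1 e) (arr_id (o2 b))) cm1 /= pre_ps1_0 pre_id.
rewrite -(hy.2 _ _ _ _ _ _ (arr_a2 e) (arr_id (o2 b))) cm1 /= pre_ps2_0 pre_id.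
rewrite setXUl !setX11; apply: (ymorph _ _).2; apply: bool_sumI.
exact: dd1.
Qed.

Lemma hyf_addr a b1 b2 b : ea_sum B b1 b2 = Some b ->
  ea_sum X (hyf a b1) (hyf a b2) = Some (hyf a b).
Proof.
move=> e; rewrite /hyf.
rewrite -(hy.2 _ _ _ _ _ _ (arr_id (o2 a)) (arr_a e)) cm1 /= pre_psa_0 pre_id.
rewrite -(hy.2 _ _ _ _ _ _ (arr_id (o2 a)) (arr_a1 e)) cm1 /= pre_ps1_0 pre_id.
rewrite -(hy.2 _ _ _ _ _ _ (arr_id (o2 a)) (arr_a2 e)) cm1 /= pre_ps2_0 pre_id.
rewrite setXUr !setX11; apply: (ymorph _ _).2; apply: bool_sumI.
exact: dd2.
Qed.

Lemma hyf_bimorph : bimorph hyf.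
Proof.
split; first exact: hyf_one.
split; [exact: hyf_addl | exact: hyf_addr].
Qed.
End Cocone.

Definition psiI (n : nat) (i : 'I_n) (k : 'I_n) : 'I_2 := if k == i then ord0 else j1.

Lemma pre_psiI0 (n : nat) (i : 'I_n) : pre (psiI i) [set ord0] = [set i].
Proof. by apply/setP => x; rewrite !inE /psiI; case: (x == i). Qed.

Lemma arr_sing (A : EA) (o : RObj A) (i : 'I_(r_n o)) :
  RArrow (o2 (r_g o [set i])) o (pre (psiI i)).
Proof.
apply: pre_arrow => k; rewrite objS1; case: (I2P k) => ->.
  by rewrite pre_psiI0.
have -> : pre (psiI i) [set j1] = ~: [set i].
  by apply/setP => x; rewrite !inE /psiI; case: (x == i).
by rewrite -orth_bool (morph_orth (r_g_morph o)).
Qed.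

Lemma y_L (A B X : EA) (y : legs A B X) (hy : is_cocone y) oA oB Z :
  y oA oB Z = L (hyf y) oA oB Z.
Proof.
move: Z; apply: (@add_ext X _ (y oA oB) (L (hyf y) oA oB)); first exact: morph_add (ymorph hy oA oB).
  exact: morph_add (L_morph (hyf_bimorph hy) oA oB).
move=> [i j]; rewrite L1 /Lw /hyf /=.
rewrite -(hy.2 _ _ _ _ _ _ (arr_sing i) (arr_sing j)) cm1 /=.
by rewrite !pre_psiI0 setX11.
Qed.


Lemma comp_morph (X Y Z : EA) (f : X -> Y) (g : Y -> Z) :
  ea_morph f -> ea_morph g -> ea_morph (fun x => g (f x)).
Proof.
move=> [f1 f2] [g1 g2]; split; first by rewrite f1 g1.
by move=> a b c e; apply: g2; apply: f2.
Qed.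

Theorem mainTheorem6 :
  forall A B : EA,
    exists (C : EA) (c : legs A B C),
      is_colimit c /\
      exists (T : EA) (t : A -> B -> T), is_tensor t /\ ea_iso T C.
Proof.
move=> A B.
have tb := tt_bimorph A B.
exists (TEA A B), (fun oA oB => L (@tens A B) oA oB); split; last first.
  exists (TEA A B), (@tens A B); split; first exact: TEA_tensor.
  by exists id, id; do !split.
split.
  split; first by move=> oA oB; exact: L_morph tb oA oB.
  by move=> oA oA' oB oB' fA fB hA hB Z; apply: L_nat.
move=> X x hx.
have hb := hyf_bimorph hx.
exists (uf (hyf x)); split.
  split; first exact: uf_morph.
  move=> oA oB; apply: add_ext.
  - exact: morph_add (comp_morph (L_morph tb oA oB) (uf_morph hb)).
  - exact: morph_add (ymorph hx oA oB).
  - move=> p; rewrite (y_L hx) L1 L1 /Lw.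
    by rewrite uf_tt.
move=> v vm vc y; apply: uf_unique => // a b.
rewrite /hyf -vc; congr v.
by rewrite L1 /Lw !objS1.
Qed.
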